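(* In the asymptotic framework described in the context, suppose $y>0$, $F_{\Sigma_n}(u)\to F_\Sigma(u)$ almost surely for almost every $u>0$, and the eigenvalues of each $\Sigma_n$ lie in a segment $[\sigma_{\min},\sigma_{\max}]$. Then for any real $z<0$, the fixed point equation in $s$ \[s=1+\lim_{n,d\to\infty}\frac1n\mathrm{tr}\left(zs\Sigma_n\left(I-zs\Sigma_n\right)^{-1}\right)\] has at most one non-negative real solution.
   Context: Asymptotic framework: a sequence of positive semidefinite matrices $\Sigma_n\in\mathbb{R}^{d\times d}$ indexed by $n$, with $d=d(n)$, $n,d\to\infty$, $d/n\to y\in[0,1)$. $F_{\Sigma_n}(u)=d^{-1}\sum_{i=1}^d\mathbb{I}(\lambda_i(\Sigma_n)\le u)$ is the empirical spectral distribution, $F_\Sigma$ a limiting distribution function; $0<\sigma_{\min}\le\sigma_{\max}$ do not depend on $n$. *)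

(* Defs.v *)
From HB Require Import structures.
From mathcomp Require Import all_boot all_order all_algebra.
From mathcomp Require Import all_classical all_reals all_analysis.
Set Implicit Arguments. Unset Strict Implicit. Unset Printing Implicit Defensive.
Import Order.TTheory GRing.Theory Num.Theory numFieldNormedType.Exports.
Local Open Scope ring_scope.
Local Open Scope classical_set_scope.

(* [lam] is a (multiset of) eigenvalue(s) of the real symmetric matrix [A]:
   A = U^T diag(lam) U with U orthogonal (spectral decomposition). *)
Definition spectral_decomp (R : realType) (d : nat) (A : 'M[R]_d) (lam : 'rV[R]_d) : Prop :=
  exists U : 'M[R]_d, U *m U^T = 1%:M /\ A = U^T *m diag_mx lam *m U.

Definition esd (R : realType) (d : nat) (lam : 'rV[R]_d) (u : R) : R :=
  (#|[set i : 'I_d | lam 0 i <= u]|)%:R / d%:R.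

Definition distribution_function (R : realType) (F : R -> R) : Prop :=
  {homo F : x y / x <= y} /\
  (forall a : R, F x @[x --> a^'+] --> F a) /\
  (F x @[x --> -oo] --> (0:R)) /\ (F x @[x --> +oo] --> (1:R)).

(* Main.v *)
Require Import Defs.
From HB Require Import structures.
From mathcomp Require Import all_boot all_order all_algebra.
From mathcomp Require Import all_classical all_reals all_analysis.
From mathcomp Require Import ring lra.
Import Order.TTheory GRing.Theory Num.Theory numFieldNormedType.Exports.
Local Open Scope ring_scope.
Local Open Scope classical_set_scope.

Lemma tr_formula {R : realType} (k : nat) (A : 'M[R]_k) (l : 'rV[R]_k) (c : R) :
  spectral_decomp A l -> (forall i, 0 <= l 0 i) -> c <= 0 ->
  \tr (c *: A *m invmx (1%:M - c *: A)) = \sum_i (c * l 0 i) / (1 - c * l 0 i).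
Proof.
case=> U [UU ->] l0 c0.
have UtU : U^T *m U = 1%:M by apply: mulmx1C.
have ha i : 1 - c * l 0 i != 0.
  have : c * l 0 i <= 0 by rewrite mulr_le0_ge0.
  move=> h; apply/negP => /eqP h'; move: h h'; move: (c * l 0 i) => x.
  by clear; move=> h h'; lra.
pose a := \row_i (1 - c * l 0 i).
pose e := \row_i (1 - c * l 0 i)^-1.
have Da : diag_mx a = 1%:M - c *: diag_mx l.
  apply/matrixP => i j; rewrite !mxE; case: eqVneq => [->|_]; rewrite ?mulr1n ?mulr0n //.
  by rewrite mulr0 subr0.
have eq1 : 1%:M - c *: (U^T *m diag_mx l *m U) = U^T *m diag_mx a *m U.
  by rewrite Da mulmxBr mulmxBl mulmx1 UtU -scalemxAr -scalemxAl.
have ae : diag_mx a *m diag_mx e = 1%:M.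
  apply/matrixP => i j; rewrite mul_diag_mx !mxE.
  case: eqVneq => [->|_]; rewrite ?mulr1n ?mulr0n ?mulr0 //.
  by rewrite mulfV.
have P : (U^T *m diag_mx a *m U) *m (U^T *m diag_mx e *m U) = 1%:M.
  by rewrite !mulmxA -(mulmxA _ U) UU mulmx1 -(mulmxA _ (diag_mx a)) ae mulmx1.
have inv : invmx (U^T *m diag_mx a *m U) = U^T *m diag_mx e *m U.
  have [uM _] := mulmx1_unit P.
  by rewrite -[RHS]mul1mx -(mulVmx uM) -(mulmxA (invmx _)) P mulmx1.
rewrite eq1 inv.
have -> : c *: (U^T *m diag_mx l *m U) *m (U^T *m diag_mx e *m U)
    = U^T *m (c *: (diag_mx l *m diag_mx e)) *m U.
  rewrite -scalemxAl -scalemxAr -scalemxAl; congr (_ *: _).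
  by rewrite !mulmxA -(mulmxA _ U U^T) UU mulmx1.
rewrite mxtrace_mulC mulmxA UU mul1mx mxtraceZ mul_diag_mx.
rewrite /mxtrace mulr_sumr; apply: eq_bigr => i _.
by rewrite !mxE eqxx mulr1n mulrA.
Qed.

Lemma mono_term (R : realType) (x1 x2 : R) : x1 <= x2 -> x2 <= 0 ->
  x1 / (1 - x1) <= x2 / (1 - x2).
Proof.
move=> h1 h2.
have p1 : 0 < 1 - x1 by lra.
have p2 : 0 < 1 - x2 by lra.
rewrite ler_pdivrMr // mulrAC ler_pdivlMr //.
nra.
Qed.

Lemma step (R : realType) (k : nat) (A : 'M[R]_k) (l : 'rV[R]_k) (c1 c2 m : R) :
  spectral_decomp A l -> (forall i, 0 <= l 0 i) -> c1 <= c2 -> c2 <= 0 -> 0 <= m ->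
  m * \tr (c1 *: A *m invmx (1%:M - c1 *: A)) <= m * \tr (c2 *: A *m invmx (1%:M - c2 *: A)).
Proof.
move=> hs hl h12 h2 hm.
rewrite (tr_formula _ _ _ _ hs hl h2) (tr_formula _ _ _ _ hs hl (le_trans h12 h2)).
apply: ler_wpM2l => //.
apply: ler_sum => i _.
apply: mono_term; first by apply: ler_wpM2r.
by rewrite mulr_le0_ge0.
Qed.

Theorem lemmaA3 (R : realType) (d : nat -> nat) (y : R)
  (Sigma : forall n : nat, 'M[R]_(d n)) (lam : forall n : nat, 'rV[R]_(d n))
  (FSigma : R -> R) (sigma_min sigma_max : R) :
  ((d n)%:R / n%:R : R) @[n --> \oo] --> y ->
  0 < y -> y < 1 ->
  (forall n, spectral_decomp (Sigma n) (lam n)) ->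
  0 < sigma_min -> sigma_min <= sigma_max ->
  (forall n i, sigma_min <= lam n 0 i <= sigma_max) ->
  distribution_function FSigma ->
  (@lebesgue_measure R).-negligible
     [set u : R | 0 < u /\ ~ (esd (lam n) u @[n --> \oo] --> FSigma u)] ->
  forall z : R, z < 0 ->
  forall s1 s2 : R, 0 <= s1 -> 0 <= s2 ->
  ((n%:R)^-1 * \tr ((z * s1) *: Sigma n *m invmx (1%:M - (z * s1) *: Sigma n)))
     @[n --> \oo] --> s1 - 1 ->
  ((n%:R)^-1 * \tr ((z * s2) *: Sigma n *m invmx (1%:M - (z * s2) *: Sigma n)))
     @[n --> \oo] --> s2 - 1 ->
  s1 = s2.
Proof.
move=> _ _ _ hsd hmin _ hlam _ _ z z0.
have l0 n i : 0 <= lam n 0 i.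
  by have /andP[h _] := hlam n i; apply: le_trans h; apply: ltW.
have key : forall a b : R, 0 <= a -> a <= b ->
  ((n%:R)^-1 * \tr ((z * a) *: Sigma n *m invmx (1%:M - (z * a) *: Sigma n)))
     @[n --> \oo] --> a - 1 ->
  ((n%:R)^-1 * \tr ((z * b) *: Sigma n *m invmx (1%:M - (z * b) *: Sigma n)))
     @[n --> \oo] --> b - 1 -> b <= a.
  move=> a b a0 ab ha hb.
  have : b - 1 <= a - 1; last by lra.
  apply: (ler_cvg_to hb ha).
  near=> n.
  have za : z * a <= 0 by rewrite mulr_le0_ge0 // ltW.
  have zb : z * b <= z * a by rewrite ler_wnM2l // ltW.
  apply: (@step R _ _ _ _ _ _ (hsd n) (l0 n)) => //.
move=> s1 s2 h1 h2 H1 H2.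
case: (leP s1 s2) => h.
  by apply/eqP; rewrite eq_le h (key s1 s2 h1 h H1 H2).
by apply/eqP; rewrite eq_le (key s2 s1 h2 (ltW h) H2 H1) (ltW h).
Unshelve. all: by end_near.
Qed.
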